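(* Let $\Gamma=(G,w,\ell)$ be a tropical curve and $P\in\mathcal C_G$. Then the class $[T_P]$ contains no effective divisor (i.e. $r_\Gamma(T_P)=-1$) if and only if $P=\emptyset$ and $\Gamma$ is pure (i.e. $w(v)=0$ for all $v\in V$).
   Context: A tropical curve is a triple $\Gamma=(G,w,\ell)$ where $G=(V,E)$ is a finite connected graph (loops and multiple edges allowed), $w\colon V\to\mathbb Z_{\ge 0}$ with $2w(v)-2+\deg_G(v)>0$ for all $v$ (loops count twice), and $\ell\colon E\to\mathbb R_{>0}$; it is viewed as a metric space with edges segments (circles for loops) of length $\ell(e)$; $p_e$ is the mid-point of $e$. Divisors, rational functions and linear equivalence are the usual tropical ones; the rank $r_\Gamma(D)$ equals $-1$ exactly when $D$ is not linearly equivalent to any effective divisor. $\mathcal C_G$ is the set of $P\subseteq E$ such that every vertex has even degree in the subgraph spanned by $P$ (loops counting twice). For $P\in\mathcal C_G$, $$T_P:=\sum_{v\in V}\Big(\frac{\deg_P(v)}{2}-1+w(v)\Big)v+\sum_{e\in E\setminus P}p_e,$$ whose class is a theta-characteristic of $\Gamma$. *)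

(* Defs.v *)
From HB Require Import structures.
From mathcomp Require Import all_boot all_order all_algebra.
From mathcomp Require Import reals.
From Stdlib Require List.

Set Implicit Arguments.
Unset Strict Implicit.
Unset Printing Implicit Defensive.

Import Order.TTheory GRing.Theory Num.Theory.
Local Open Scope ring_scope.

(* Points of a metric graph: a vertex, or an interior point of an edge e at
   distance t from the source of e (0 < t < len e). *)
Inductive tpoint (V E R : Type) := TVert of V | TEdge of E & R.

Section Tropical.
Variables (V E : finType) (src tgt : E -> V).

(* the underlying graph G = (V,E): each edge e has endpoints src e, tgt e;
   loops are edges with src e = tgt e *)
Definition adjb : rel V := fun u v =>
  [exists e, ((src e == u) && (tgt e == v)) || ((src e == v) && (tgt e == u))].

Definition graph_connected : Prop := forall u v : V, connect adjb u v.

(* degree in G, loops counted twice *)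
Definition degG (v : V) : nat :=
  (#|[set e | src e == v]| + #|[set e | tgt e == v]|)%N.

Definition degP (P : {set E}) (v : V) : nat :=
  (#|[set e in P | src e == v]| + #|[set e in P | tgt e == v]|)%N.

Definition in_CG (P : {set E}) : Prop := forall v, ~~ odd (degP P v).

Definition stable_weight (w : V -> nat) : Prop :=
  forall v, (2 < 2 * w v + degG v)%N.

Variable R : realType.
Variable len : E -> R.

Local Notation pt := (tpoint V E R).

Definition valid_pt (x : pt) : Prop :=
  match x with TVert _ => True | TEdge e t => 0 < t < len e end.

Definition is_divisor (D : pt -> int) : Prop :=
  exists s : seq pt, forall x, valid_pt x -> D x != 0 -> List.In x s.

Definition effective (D : pt -> int) : Prop :=
  forall x, valid_pt x -> (0 <= D x)%R.

Definition edge_restr (f : pt -> R) (e : E) (t : R) : R :=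
  if t == 0 then f (@TVert V E R (src e))
  else if t == len e then f (@TVert V E R (tgt e))
  else f (@TEdge V E R e t).

(* rational function: continuous, piecewise linear with integer slopes and
   finitely many pieces: on each edge there is a subdivision
   0 = t_0 < t_1 < ... < t_k = len e with f affine of integer slope on each
   [t_i, t_(i+1)] *)
Definition is_rat_fun (f : pt -> R) : Prop :=
  forall e, exists (ts : seq R) (s : seq int),
    [/\ path <%R 0 ts, last 0 ts = len e &
        forall i : nat, (i < size ts)%N -> forall t : R,
          (0 :: ts)`_i <= t <= ts`_i ->
          edge_restr f e t = edge_restr f e (0 :: ts)`_i
                             + (s`_i)%:~R * (t - (0 :: ts)`_i)].

Definition slope_right (f : pt -> R) (e : E) (t : R) (k : int) : Prop :=
  exists2 eps : R, 0 < eps & forall u, 0 < u < eps ->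
    edge_restr f e (t + u) = edge_restr f e t + k%:~R * u.

Definition slope_left (f : pt -> R) (e : E) (t : R) (k : int) : Prop :=
  exists2 eps : R, 0 < eps & forall u, 0 < u < eps ->
    edge_restr f e (t - u) = edge_restr f e t - k%:~R * u.

(* D = div(f) = sum_x ord_x(f) x, ord_x(f) = sum of outgoing slopes at x *)
Definition is_div_of (f : pt -> R) (D : pt -> int) : Prop :=
  forall x, valid_pt x ->
  match x with
  | TEdge e t => exists kr kl : int,
      [/\ slope_right f e t kr, slope_left f e t kl & D x = kr - kl]
  | TVert v => exists kout kin : E -> int,
      (forall e, slope_right f e 0 (kout e) /\ slope_left f e (len e) (kin e))
      /\ D x = \sum_(e | src e == v) kout e - \sum_(e | tgt e == v) kin e
  end.

Definition lin_equiv (D D' : pt -> int) : Prop :=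
  exists f, is_rat_fun f /\ is_div_of f (fun x => D x - D' x).

Definition rank_neg1 (D : pt -> int) : Prop :=
  ~ exists D', [/\ is_divisor D', effective D' & lin_equiv D D'].

Definition theta_div (w : V -> nat) (P : {set E}) : pt -> int :=
  fun x => match x with
  | TVert v => Posz (degP P v %/ 2)%N - 1 + Posz (w v)
  | TEdge e t => if (e \notin P) && (t == len e / 2) then 1 else 0
  end.

End Tropical.

(* Main.v *)
Require Import Defs.
From HB Require Import structures.
From mathcomp Require Import all_boot all_order all_algebra.
From mathcomp Require Import reals.
From mathcomp Require Import lra zify ring.
From Stdlib Require List.
Set Implicit Arguments.
Unset Strict Implicit.
Unset Printing Implicit Defensive.
Import Order.TTheory GRing.Theory Num.Theory.
Local Open Scope ring_scope.

Definition pl (R : realType) (F : R -> R) (x L : R) : Prop :=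
  exists (ts : seq R) (s : seq int),
    [/\ path <%R x ts, last x ts = L &
        forall i : nat, (i < size ts)%N -> forall t : R,
          (x :: ts)`_i <= t <= ts`_i ->
          F t = F (x :: ts)`_i + (s`_i)%:~R * (t - (x :: ts)`_i)].

Lemma pl_cons (R : realType) (F : R -> R) (x y L : R) (k : int) :
  x <= y -> y <= L -> x < L ->
  (x < y -> forall t, x <= t <= y -> F t = F x + k%:~R * (t - x)) ->
  (y < L -> pl F y L) -> pl F x L.
Proof.
move=> xy yL xL Haff Hrest.
have [xy'|yx] := ltP x y; last first.
  have exy : y = x by apply/eqP; rewrite eq_le yx xy.
  by rewrite -exy; apply: Hrest; rewrite exy.
have [yL'|Ly] := ltP y L.
  have [ts [s [p l H]]] := Hrest yL'.
  exists (y :: ts), (k :: s); split => //=; first by rewrite xy'.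
  case=> [|i] /= Hi t Ht; first exact: Haff.
  exact: H.
have eyL : y = L by apply/eqP; rewrite eq_le yL Ly.
exists [:: L], [:: k]; split => //=; first by rewrite -eyL xy'.
case=> [|i] //= _ t Ht; apply: Haff => //; by rewrite eyL.
Qed.

Lemma test (R : realType) (a b : R) : a < b -> 0 < b - a.
Proof. move=> h; lra. Qed.

Definition RS (R : realType) (F : R -> R) (t : R) (k : int) : Prop :=
  exists2 eps : R, 0 < eps & forall u, 0 < u < eps -> F (t + u) = F t + k%:~R * u.
Definition LS (R : realType) (F : R -> R) (t : R) (k : int) : Prop :=
  exists2 eps : R, 0 < eps & forall u, 0 < u < eps -> F (t - u) = F t - k%:~R * u.

Lemma RS_ext (R : realType) (F G : R -> R) t k d :
  RS F t k -> 0 < d -> (forall s, t <= s <= t + d -> F s = G s) -> RS G t k.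
Proof.
move=> [eps he H] hd hFG; exists (Order.min eps d); first by rewrite lt_min he hd.
move=> u /andP[u0]; rewrite lt_min => /andP[ue ud].
rewrite -!hFG; first exact/H/andP.
- apply/andP; split; lra.
- apply/andP; split; lra.
Qed.

Lemma LS_ext (R : realType) (F G : R -> R) t k d :
  LS F t k -> 0 < d -> (forall s, t - d <= s <= t -> F s = G s) -> LS G t k.
Proof.
move=> [eps he H] hd hFG; exists (Order.min eps d); first by rewrite lt_min he hd.
move=> u /andP[u0]; rewrite lt_min => /andP[ue ud].
rewrite -!hFG; first exact/H/andP.
- apply/andP; split; lra.
- apply/andP; split; lra.
Qed.

Lemma RS_uniq (R : realType) (F : R -> R) t k k' d :
  RS F t k -> 0 < d -> (forall u, 0 < u <= d -> F (t + u) = F t + k'%:~R * u) -> k = k'.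
Proof.
move=> [eps he H] hd H'.
pose u := Order.min eps d / 2.
have hm : 0 < Order.min eps d by rewrite lt_min he hd.
have hu : 0 < u by rewrite /u divr_gt0.
have hue : u < eps.
  have : Order.min eps d <= eps by rewrite ge_min lexx.
  rewrite /u; lra.
have hud : u <= d.
  have : Order.min eps d <= d by rewrite ge_min lexx orbT.
  rewrite /u; lra.
have := H u; rewrite hu hue => /(_ isT).
rewrite H' ?hu ?hud // => /addrI /(mulIf (lt0r_neq0 hu)) /intr_inj //.
Qed.

Lemma LS_uniq (R : realType) (F : R -> R) t k k' d :
  LS F t k -> 0 < d -> (forall u, 0 < u <= d -> F (t - u) = F t - k'%:~R * u) -> k = k'.
Proof.
move=> [eps he H] hd H'.
pose u := Order.min eps d / 2.
have hm : 0 < Order.min eps d by rewrite lt_min he hd.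
have hu : 0 < u by rewrite /u divr_gt0.
have hue : u < eps.
  have : Order.min eps d <= eps by rewrite ge_min lexx.
  rewrite /u; lra.
have hud : u <= d.
  have : Order.min eps d <= d by rewrite ge_min lexx orbT.
  rewrite /u; lra.
have := H u; rewrite hu hue => /(_ isT).
rewrite H' ?hu ?hud // => /addrI /oppr_inj /(mulIf (lt0r_neq0 hu)) /intr_inj //.
Qed.

Definition clamp (R : realType) (p q t : R) : R :=
  if t <= p then p else if t <= q then t else q.

Lemma clamp_lo (R : realType) (p q t : R) : t <= p -> clamp p q t = p.
Proof. by rewrite /clamp => ->. Qed.

Lemma clamp_mid (R : realType) (p q t : R) : p <= t <= q -> clamp p q t = t.
Proof.
move=> /andP[pt tq]; rewrite /clamp tq; case: ifP => // tp.
by apply/eqP; rewrite eq_le tp pt.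
Qed.

Lemma clamp_hi (R : realType) (p q t : R) : p <= q -> q <= t -> clamp p q t = q.
Proof.
move=> pq qt; rewrite /clamp; case: ifP => tp.
  apply/eqP; rewrite eq_le pq; apply: le_trans qt tp.
case: ifP => tq //.
by apply/eqP; rewrite eq_le tq qt.
Qed.

Definition Gp (R : realType) (a : R) (k : int) (p q t : R) : R :=
  a + k%:~R * (clamp p q t - p).

Definition krG (R : realType) (k : int) (p q t : R) : int :=
  if (p <= t) && (t < q) then k else 0.
Definition klG (R : realType) (k : int) (p q t : R) : int :=
  if (p < t) && (t <= q) then k else 0.

Lemma Gp_RS (R : realType) (a : R) k p q t : p <= q -> RS (Gp a k p q) t (krG k p q t).
Proof.
move=> pq; rewrite /krG /Gp.
have [tp|pt] := ltP t p.
  rewrite /=; exists (p - t); first lra.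
  move=> u /andP[u0 ue]; rewrite !clamp_lo; [|lra|lra].
  by rewrite mul0r addr0.
have [tq|qt] := ltP t q.
  rewrite /=; exists (q - t); first lra.
  move=> u /andP[u0 ue]; rewrite !clamp_mid; last 2 first.
  - apply/andP; split; lra.
  - apply/andP; split; lra.
  rewrite !mulrDr !mulrN; lra.
rewrite andbF; exists 1; first lra.
move=> u /andP[u0 ue]; rewrite !clamp_hi //; last lra.
by rewrite mul0r addr0.
Qed.

Lemma Gp_LS (R : realType) (a : R) k p q t : p <= q -> LS (Gp a k p q) t (klG k p q t).
Proof.
move=> pq; rewrite /klG /Gp.
have [pt|tp] := ltP p t; last first.
  exists 1; first lra.
  move=> u /andP[u0 ue]; rewrite !clamp_lo; [|lra|lra].
  by rewrite mul0r subr0.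
have [tq|qt] := leP t q.
  rewrite /=; exists (t - p); first lra.
  move=> u /andP[u0 ue]; rewrite !clamp_mid; last 2 first.
  - apply/andP; split; lra.
  - apply/andP; split; lra.
  rewrite !mulrDr !mulrN; lra.
rewrite andbF; exists (t - q); first lra.
move=> u /andP[u0 ue]; rewrite !clamp_hi //; first by rewrite mul0r subr0.
all: lra.
Qed.

Lemma pl3 (R : realType) (F : R -> R) (a : R) (k : int) (p q L : R) :
  0 <= p -> p <= q -> q <= L -> 0 < L ->
  (forall t, 0 <= t <= L -> F t = Gp a k p q t) -> pl F 0 L.
Proof.
move=> p0 pq qL L0 HF.
apply: (@pl_cons _ _ 0 p L 0) => //; first lra.
  move=> _ t /andP[t0 tp]; rewrite !HF; last 2 first.
  - apply/andP; split; lra.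
  - apply/andP; split; lra.
  by rewrite /Gp !clamp_lo // ?mul0r ?addr0.
move=> pL; apply: (@pl_cons _ _ p q L k) => //.
  move=> _ t /andP[pt tq]; rewrite !HF; last 2 first.
  - apply/andP; split; lra.
  - apply/andP; split; lra.
  rewrite /Gp (@clamp_mid _ p q t) ?pt ?tq // (@clamp_lo _ p q p) //.
  by rewrite subrr mulr0 addr0.
move=> qL'; apply: (@pl_cons _ _ q L L 0) => //; last by rewrite ltxx.
move=> _ t /andP[qt tL]; rewrite !HF; last 2 first.
- apply/andP; split; lra.
- apply/andP; split; lra.
by rewrite /Gp !clamp_hi // mul0r addr0.
Qed.

Lemma fin_min (T : finType) (R : realType) (P : pred T) (g : T -> R) x0 :
  P x0 -> exists x, P x /\ forall y, P y -> g x <= g y.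
Proof.
move=> Px0.
suff H : forall s : seq T, (exists2 x, x \in s & P x) ->
   exists x, P x /\ forall y, y \in s -> P y -> g x <= g y.
  have [|x [Px Hx]] := H (enum T); first by exists x0; rewrite ?mem_enum.
  by exists x; split => // y; apply: Hx; rewrite mem_enum.
elim=> [[x]|a s IH [x]]; first by rewrite in_nil.
rewrite inE => xas Px.
have [Pa|Pa] := boolP (P a); last first.
  have xs : x \in s.
    by case/orP: xas => // /eqP exa; move: Pa; rewrite -exa Px.
  have [z [Pz Hz]] := IH (ex_intro2 _ _ x xs Px).
  exists z; split => // y'; rewrite inE => /orP[/eqP ->|]; last exact: Hz.
  by rewrite (negbTE Pa).
have [Hs|Hs] := boolP (has P s); last first.
  exists a; split => // y'; rewrite inE => /orP[/eqP ->//|y's Py'].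
  by move/hasPn: Hs => /(_ _ y's); rewrite Py'.
have [y ys Py] := hasP Hs.
have [z [Pz Hz]] := IH (ex_intro2 _ _ y ys Py).
have [gza|gaz] := leP (g z) (g a).
  exists z; split => // y'; rewrite inE => /orP[/eqP -> //|]; exact: Hz.
exists a; split => // y'; rewrite inE => /orP[/eqP -> //|y's Py'].
by apply: le_trans (Hz _ y's Py'); rewrite ltW.
Qed.

Definition endp (V E : Type) (src tgt : E -> V) (b : bool) (e : E) : V :=
  if b then src e else tgt e.

Definition dinv (V E : finType) (src tgt : E -> V) (R : realType) (c : E -> R)
   (S X : {set V}) (h : V -> R) : Prop :=
 [/\ S \subset X,
     forall v, v \in S -> h v = 0,
     forall e b, endp src tgt b e \in X -> endp src tgt (~~b) e \in X ->
        h (endp src tgt b e) - h (endp src tgt (~~b) e) <= c e,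
     forall v, v \in X -> v \notin S -> exists e b,
        [/\ endp src tgt b e = v, endp src tgt (~~b) e \in X &
            h (endp src tgt (~~b) e) + c e = h v]
   & forall z e b, z \in X -> endp src tgt b e \in X -> endp src tgt (~~b) e \notin X ->
        h z <= h (endp src tgt b e) + c e].

Lemma crossing_exists (V E : finType) (src tgt : E -> V) (X : {set V}) x y :
  graph_connected src tgt -> x \in X -> y \notin X ->
  exists e b, endp src tgt b e \in X /\ endp src tgt (~~b) e \notin X.
Proof.
move=> hc xX yX.
have [/existsP [[e b] /andP[h1 h2]]|hn] :=
  boolP [exists d : E * bool, (endp src tgt d.2 d.1 \in X) && (endp src tgt (~~ d.2) d.1 \notin X)].
  by exists e, b.
have cl : closed (adjb src tgt) X.
  move=> u v /existsP [e he].
  have H : forall b, (endp src tgt b e \in X) = (endp src tgt (~~b) e \in X).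
    move=> b; apply/idP/idP => H.
      apply/negPn/negP => H'; move/existsPn: hn => /(_ (e, b)) /=; by rewrite H H'.
    apply/negPn/negP => H'; move/existsPn: hn => /(_ (e, ~~b)) /=; by rewrite negbK H H'.
  case/orP: he => /andP[/eqP <- /eqP <-].
  - exact: (H true).
  - by rewrite (H false).
have := closed_connect cl (hc x y); rewrite xX => /esym; by rewrite (negbTE yX).
Qed.

Lemma endpK (V E : Type) (src tgt : E -> V) b e : endp src tgt (~~ ~~ b) e = endp src tgt b e.
Proof. by rewrite negbK. Qed.

Lemma dinv_step (V E : finType) (src tgt : E -> V) (R : realType) (c : E -> R)
   (S X : {set V}) (h : V -> R) x y :
  (forall e, 0 <= c e) -> graph_connected src tgt -> dinv src tgt c S X h ->
  x \in X -> y \notin X ->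
  exists X' h', dinv src tgt c S X' h' /\ #|X'| = (#|X|).+1.
Proof.
move=> c0 hc [I1 I2 I3 I4 I5] xX yX.
have [e1 [b1 [Hin1 Hout1]]] := crossing_exists hc xX yX.
pose cr := fun d : E * bool => (endp src tgt d.2 d.1 \in X) && (endp src tgt (~~ d.2) d.1 \notin X).
pose val := fun d : E * bool => h (endp src tgt d.2 d.1) + c d.1.
have [[e0 b0] [/andP /= [H0in H0out] Hmin]] := @fin_min _ R cr val (e1, b1) (introT andP (conj Hin1 Hout1)).
set y0 := endp src tgt (~~ b0) e0 in H0out.
set m := val (e0, b0).
have Hm : forall e b, endp src tgt b e \in X -> endp src tgt (~~b) e \notin X -> m <= h (endp src tgt b e) + c e.
  by move=> e b h1 h2; apply: (Hmin (e, b)); rewrite /cr /= h1 h2.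
have HzX : forall z, z \in X -> h z <= m by move=> z zX; apply: I5.
pose h' := fun v => if v == y0 then m else h v.
have h'X : forall v, v \in X -> h' v = h v.
  move=> v vX; rewrite /h'; case: eqP => // ev; by move: H0out; rewrite -ev vX.
exists (y0 |: X), h'; split; last by rewrite cardsU1 H0out.
split.
- by apply: subset_trans I1 _; apply: subsetUr.
- move=> v vS; rewrite h'X; [exact: I2 | exact: (subsetP I1)].
- move=> e b; rewrite !in_setU1.
  case: (eqVneq (endp src tgt b e) y0) => [Eu|Nu];
  case: (eqVneq (endp src tgt (~~b) e) y0) => [Ew|Nw] //= uX wX.
  + rewrite /h' Eu Ew eqxx subrr; exact: c0.
  + rewrite /h' Eu eqxx (negbTE Nw).
    have := Hm e (~~b) wX; rewrite endpK Eu => /(_ H0out); lra.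
  + rewrite /h' Ew eqxx (negbTE Nu).
    have := HzX _ uX; have := c0 e; lra.
  + rewrite !h'X //; exact: I3.
- move=> v; rewrite in_setU1 => /orP[/eqP ->|vX] vS.
    exists e0, (~~ b0); rewrite endpK; split => //.
      by rewrite in_setU1 H0in orbT.
    by rewrite h'X // /h' eqxx.
  have [e [b [E1 E2 E3]]] := I4 v vX vS.
  exists e, b; split => //; first by rewrite in_setU1 E2 orbT.
  by rewrite !h'X.
- move=> z e b; rewrite !in_setU1 negb_or => zX uX /andP[Nw wX].
  case/orP: uX => [/eqP Eu|uX].
    rewrite /h' Eu eqxx.
    case/orP: zX => [/eqP ->|zX]; first by rewrite eqxx; have := c0 e; lra.
    rewrite (_ : (z == y0) = false); last by apply/negbTE; apply/eqP => ez; move: H0out; rewrite -ez zX.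
    have := HzX _ zX; have := c0 e; lra.
  rewrite (h'X _ uX).
  case/orP: zX => [/eqP ->|zX]; first by rewrite /h' eqxx; apply: Hm.
  rewrite h'X //; exact: I5.
Qed.

Lemma dist_exists (V E : finType) (src tgt : E -> V) (R : realType) (c : E -> R) (S : {set V}) :
  (forall e, 0 <= c e) -> graph_connected src tgt -> S != set0 ->
  exists h : V -> R, [/\ forall v, v \in S -> h v = 0,
     forall e b, h (endp src tgt b e) - h (endp src tgt (~~b) e) <= c e &
     forall v, v \notin S -> exists e b,
        endp src tgt b e = v /\ h (endp src tgt (~~b) e) + c e = h v].
Proof.
move=> c0 hc /set0Pn [x0 x0S].
have H : forall n, (#|S| + n <= #|V|)%N -> exists X h, dinv src tgt c S X h /\ #|X| = (#|S| + n)%N.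
  elim=> [|n IH] hn.
    exists S, (fun _ => 0); split; last by rewrite addn0.
    split => //.
    - move=> e b _ _; rewrite subrr; exact: c0.
    - by move=> v ->.
    - move=> z e b _ _ _; rewrite add0r; exact: c0.
  have [|X [h [Hinv HX]]] := IH; first by apply: leq_trans hn; rewrite leq_add2l.
  have [y yX] : exists y, y \notin X.
    case: (boolP [exists y, y \notin X]) => [/existsP //|/existsPn Hall].
    have eX : X = setT by apply/setP => v; rewrite inE; apply/negPn; exact: Hall.
    by move: hn; rewrite addnS -HX eX cardsT ltnn.
  have x0X : x0 \in X by case: Hinv => /subsetP H1 *; apply: H1.
  have [X' [h' [Hinv' HX']]] := dinv_step c0 hc Hinv x0X yX.
  by exists X', h'; split => //; rewrite HX' HX addnS.
have [|X [h [[I1 I2 I3 I4 I5] HX]]] := H (#|V| - #|S|)%N; first by rewrite subnKC // max_card.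
have eX : X = setT.
  apply/eqP; rewrite eqEcard subsetT cardsT HX subnKC //; exact: max_card.
exists h; split => //.
- move=> e b; apply: I3; by rewrite eX inE.
- move=> v vS; have vX : v \in X by rewrite eX inE.
  have [e [b [E1 E2 E3]]] := I4 v vX vS.
  by exists e, b.
Qed.

Lemma int_le_R (R : realType) (m n : int) : m <= n -> (m%:~R : R) <= n%:~R.
Proof. by rewrite ler_int. Qed.

Lemma chain_dec (R : realType) (k : nat) (x Fv : nat -> R) (s : nat -> int) (c : R) :
 (0 < k)%N ->
 (forall i, (i < k)%N -> x i < x i.+1) ->
 (forall i, (i < k)%N -> Fv i.+1 = Fv i + (s i)%:~R * (x i.+1 - x i)) ->
 (forall i, (0 < i < k)%N -> s i - s i.-1 <= (if x i == c then 1 else 0)) ->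
 s 0%N <= -1 -> Fv k < Fv 0%N.
Proof.
move=> k0 hx hF hs s0.
have mono : forall i j, (i < j <= k)%N -> x i < x j.
  move=> i; elim=> [|j IH] /andP[ij jk] //.
  have jk' : (j < k)%N by [].
  case: (ltngtP i j) => [ij'|ji|eij]; last by rewrite eij; exact: hx jk'.
    2: by move: ij; rewrite ltnS leqNgt ji.
  apply: lt_trans (hx _ jk'); apply: IH; rewrite ij' /=; exact: ltnW.
have C1 : forall i, (i < k)%N -> s i <= s 0%N + (if c <= x i then 1 else 0).
  elim=> [|i IH] ik; first by case: ifP => _; lia.
  have ik' : (i < k)%N by apply: ltnW.
  have := hs i.+1; rewrite ik /= => /(_ isT) hsi.
  have := IH ik'.
  have xi := hx i ik'.
  case: eqP hsi => [exc|nexc] hsi.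
    rewrite -exc lexx.
    have -> : (x i.+1 <= x i) = false by apply/negbTE; rewrite -ltNge.
    lia.
  case: ifP => cxi.
    have -> : c <= x i.+1 by apply: le_trans cxi (ltW xi).
    lia.
  case: ifP => _; lia.
have C2 : forall i, (i < k)%N -> s i <= 0.
  move=> i ik; have := C1 i ik; case: ifP => _; lia.
have C3 : forall i, (0 < i <= k)%N -> Fv i < Fv 0%N.
  elim=> [//|i IH] /andP[_ ik].
  have ik' : (i < k)%N by [].
  rewrite hF //.
  have hd : 0 < x i.+1 - x i by rewrite subr_gt0 hx.
  case: i IH ik ik' hd => [|i] IH ik ik' hd.
    have hs0 : (s 0%N)%:~R <= (-1 : R) by rewrite -(intrN R 1) /= ler_int.
    nra.
  have hsi : (s i.+1)%:~R <= (0 : R) by rewrite lerz0 C2.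
  have := IH (ltnW ik); nra.
by apply: C3; rewrite k0 leqnn.
Qed.

Lemma chain_inc (R : realType) (k : nat) (x Fv : nat -> R) (s : nat -> int) (c : R) :
 (0 < k)%N ->
 (forall i, (i < k)%N -> x i < x i.+1) ->
 (forall i, (i < k)%N -> Fv i.+1 = Fv i + (s i)%:~R * (x i.+1 - x i)) ->
 (forall i, (0 < i < k)%N -> s i - s i.-1 <= (if x i == c then 1 else 0)) ->
 1 <= s k.-1 -> Fv 0%N < Fv k.
Proof.
move=> k0 hx hF hs sk.
suff : Fv (k - k)%N < Fv (k - 0)%N by rewrite subnn subn0.
apply: (@chain_dec R k (fun i => - x (k - i)%N) (fun i => Fv (k - i)%N)
   (fun i => - s (k.-1 - i)%N) (- c) k0).
- move=> i ik; rewrite ltrN2.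
  have -> : (k - i = (k - i.+1).+1)%N by lia.
  apply: hx; lia.
- move=> i ik.
  have -> : (k - i = (k - i.+1).+1)%N by lia.
  have -> : (k.-1 - i = k - i.+1)%N by lia.
  rewrite hF; last by lia.
  rewrite intrN; lra.
- move=> i /andP[i0 ik].
  have -> : (k.-1 - i.-1 = k - i)%N by lia.
  have -> : (k.-1 - i = (k - i).-1)%N by lia.
  have := hs (k - i)%N; rewrite eqr_opp.
  move=> h; move: (h (ltac:(apply/andP; split; lia))); case: ifP => _; lia.
- by rewrite subn0; lia.
Qed.

Lemma mono_chain (R : realType) (k : nat) (x : nat -> R) :
 (forall i, (i < k)%N -> x i < x i.+1) -> forall i j, (i < j <= k)%N -> x i < x j.
Proof.
move=> hx i; elim=> [|j IH] /andP[ij jk] //.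
have jk' : (j < k)%N by [].
case: (ltngtP i j) => [ij'|ji|eij]; last by rewrite eij; exact: hx jk'.
  apply: lt_trans (hx _ jk'); apply: IH; rewrite ij' /=; exact: ltnW.
by move: ij; rewrite ltnS leqNgt ji.
Qed.

Lemma edge_chain (R : realType) (F : R -> R) (L : R) :
  0 < L -> pl F 0 L ->
  (forall t, 0 < t < L -> exists kr kl, [/\ RS F t kr, LS F t kl &
        kr - kl <= (if t == L / 2 then 1 else 0)]) ->
  (forall k0, RS F 0 k0 -> k0 <= -1 -> F L < F 0) /\
  (forall k1, LS F L k1 -> 1 <= k1 -> F 0 < F L).
Proof.
move=> L0 [ts [s [Hp Hl Hpc]]] Hint.
have k0 : (0 < size ts)%N by case: ts Hp Hl {Hpc} => [_ /= Hl|] //; move: L0; rewrite -Hl ltxx.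
have xk : (0 :: ts)`_(size ts) = L by case: ts Hp Hl {Hpc k0} => //= a ts' _ <-; rewrite (nth_last 0).
set k := size ts in k0 xk Hpc.
pose x := fun i => (0 :: ts)`_i.
have hx : forall i, (i < k)%N -> x i < x i.+1 by move=> i ik; exact: (pathP 0 Hp).
rewrite -/(x k) in xk.
have x0 : x 0%N = 0 by [].
have mono := mono_chain hx.
have hF : forall i, (i < k)%N -> F (x i.+1) = F (x i) + (s`_i)%:~R * (x i.+1 - x i).
  move=> i ik; apply: Hpc => //; rewrite /x /=; apply/andP; split => //.
  exact: ltW (hx i ik).
have piece : forall i u, (i < k)%N -> 0 <= u <= x i.+1 - x i -> F (x i + u) = F (x i) + (s`_i)%:~R * u.
  move=> i u ik /andP[u0 ud]; rewrite (Hpc i ik) /=; last by move: ud; rewrite /x /= => ud; apply/andP; split; lra.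
  by congr (_ + _ * _); rewrite /x; lra.
have incr : forall i, (0 < i < k)%N -> s`_i - s`_i.-1 <= (if x i == L / 2 then 1 else 0).
  move=> i /andP[i0 ik].
  have xi0 : 0 < x i by rewrite -x0; apply: mono; rewrite i0 ltnW.
  have xiL : x i < L by rewrite -xk; apply: mono; rewrite ik leqnn.
  have [kr [kl [Hr Hle Hb]]] := Hint (x i) (ltac:(by apply/andP; split)).
  have ekr : kr = s`_i.
    apply: (RS_uniq Hr (d := x i.+1 - x i)); first by rewrite subr_gt0 hx.
    move=> u /andP[u0 ud]; apply: piece => //; apply/andP; split => //; exact: ltW.
  have ekl : kl = s`_i.-1.
    have ii : i = (i.-1).+1 by rewrite prednK.
    apply: (LS_uniq Hle (d := x i - x i.-1)).
      by rewrite subr_gt0 {2}ii hx // -ltnS -ii ltnW.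
    move=> u /andP[u0 ud].
    have hi1 : (i.-1 < k)%N by rewrite -ltnS -ii ltnW.
    have := piece i.-1 (x i - x i.-1 - u) hi1.
    rewrite -ii (_ : x i.-1 + (x i - x i.-1 - u) = x i - u); last by lra.
    move=> ->; last by apply/andP; split; lra.
    have := hF i.-1 hi1; rewrite -ii => ->.
    rewrite !mulrDr !mulrN; lra.
  by rewrite -ekr -ekl.
split.
- move=> kk Hr kn.
  have ekk : kk = s`_0.
    apply: (RS_uniq Hr (d := x 1%N - x 0%N)); first by rewrite subr_gt0 hx.
    by move=> u /andP[u0 ud]; have := piece 0%N u k0; rewrite x0 => -> //; apply/andP; split => //; exact: ltW.
  have := @chain_dec R k x (fun i => F (x i)) (fun i => s`_i) (L / 2) k0 hx hF incr.
  by rewrite xk x0 -ekk => ->.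
- move=> kk Hl' kp.
  have ii : k = (k.-1).+1 by rewrite prednK.
  have hk1 : (k.-1 < k)%N by rewrite -ii.
  have ekk : kk = s`_(k.-1).
    apply: (LS_uniq Hl' (d := x k - x k.-1)).
      by rewrite {1}ii subr_gt0 hx.
    move=> u /andP[u0 ud].
    have := piece k.-1 (x k - x k.-1 - u) hk1.
    rewrite -ii (_ : x k.-1 + (x k - x k.-1 - u) = x k - u); last by lra.
    rewrite xk => ->; last by apply/andP; split; lra.
    have := hF k.-1 hk1; rewrite -ii xk => ->.
    rewrite !mulrDr !mulrN; lra.
  have := @chain_inc R k x (fun i => F (x i)) (fun i => s`_i) (L / 2) k0 hx hF incr.
  by rewrite xk x0 -ekk => ->.
Qed.

Lemma degP_set0 (V E : finType) (src tgt : E -> V) v : degP src tgt set0 v = 0%N.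
Proof.
rewrite /degP.
have -> : [set e in (set0 : {set E}) | src e == v] = set0 by apply/setP => e; rewrite !inE.
have -> : [set e in (set0 : {set E}) | tgt e == v] = set0 by apply/setP => e; rewrite !inE.
by rewrite cards0.
Qed.

Lemma no_eff (R : realType) (V E : finType) (src tgt : E -> V) (w : V -> nat) (len : E -> R) :
  (0 < #|V|)%N -> (forall e, 0 < len e) -> (forall v, w v = 0%N) ->
  rank_neg1 src tgt len (theta_div src tgt len w set0).
Proof.
move=> V0 L0 w0 [D' [_ Deff [f [frat fdiv]]]].
case/card_gt0P: V0 => x0 _.
have [v0 [_ vmin]] := @fin_min V R predT (fun v => f (TVert E R v)) x0 isT.
have [kout [kin [Hsl Hsum]]] := fdiv (TVert E R v0) I.
have D0 := Deff (TVert E R v0) I.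
move: Hsum; rewrite /= degP_set0 w0 /= => Hsum.
have Hex : [exists e, ((src e == v0) && (kout e <= -1)) || ((tgt e == v0) && (1 <= kin e))].
  apply: contraT => /existsPn Hn.
  have A : 0 <= \sum_(e | src e == v0) kout e.
    apply: sumr_ge0 => e se; move: (Hn e); rewrite se /= negb_or => /andP[h _]; lia.
  have B : \sum_(e | tgt e == v0) kin e <= 0.
    rewrite -oppr_ge0 -sumrN; apply: sumr_ge0 => e se; move: (Hn e); rewrite se /= negb_or => /andP[_ h]; lia.
  move: Hsum; rewrite div0n => Hsum.
  have H3 : \sum_(e | src e == v0) kout e - \sum_(e | tgt e == v0) kin e <= -1 by rewrite -Hsum; lia.
  lia.
have Hedge : forall e, (forall k0, RS (edge_restr src tgt len f e) 0 k0 -> k0 <= -1 ->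
                     edge_restr src tgt len f e (len e) < edge_restr src tgt len f e 0) /\
                   (forall k1, LS (edge_restr src tgt len f e) (len e) k1 -> 1 <= k1 ->
                     edge_restr src tgt len f e 0 < edge_restr src tgt len f e (len e)).
  move=> e; apply: edge_chain => //.
  move=> t /andP[t0 tL].
  have [kr [kl [Hr Hl Hd]]] := fdiv (TEdge V e t) (ltac:(by rewrite /= t0 tL)).
  exists kr, kl; split => //.
  have := Deff (TEdge V e t) (ltac:(by rewrite /= t0 tL)).
  move: Hd; rewrite /= inE /=; case: ifP => _ Hd; lia.
have eR0 : forall e, edge_restr src tgt len f e 0 = f (TVert E R (src e)) by move=> e; rewrite /edge_restr eqxx.
have eRL : forall e, edge_restr src tgt len f e (len e) = f (TVert E R (tgt e)).
  by move=> e; rewrite /edge_restr (negbTE (lt0r_neq0 (L0 e))) eqxx.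
case/existsP: Hex => e /orP[/andP[/eqP se ke]|/andP[/eqP te ke]].
- have [H _] := Hedge e; have [H1 _] := Hsl e.
  have := H _ H1 ke; rewrite eR0 eRL se.
  by move/(_ (tgt e) isT): vmin; rewrite leNgt => /negP.
- have [_ H] := Hedge e; have [_ H1] := Hsl e.
  have := H _ H1 ke; rewrite eR0 eRL te.
  by move/(_ (src e) isT): vmin; rewrite leNgt => /negP.
Qed.

Definition kG (R : realType) (a b : R) : int := if b <= a then -1 else 1.
Definition pG (R : realType) (a b c : R) : R := if b <= a then c + b - a else c.
Definition qG (R : realType) (a b c : R) : R := if b <= a then c else c + b - a.

Lemma intm1 (R : realType) : ((-1 : int)%:~R : R) = -1.
Proof. by rewrite intrN. Qed.
Lemma intp1 (R : realType) : ((1 : int)%:~R : R) = 1.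
Proof. by []. Qed.

Lemma ef_range (R : realType) (a b L : R) : 0 < L -> a - b <= L / 2 -> b - a <= L / 2 ->
  [/\ 0 <= pG a b (L/2), pG a b (L/2) <= qG a b (L/2) & qG a b (L/2) <= L].
Proof. move=> L0 hab hba; rewrite /pG /qG; have [ba|ab] := leP b a; split; lra. Qed.

Lemma ef_G0 (R : realType) (a b L : R) : 0 < L -> a - b <= L / 2 -> b - a <= L / 2 ->
  Gp a (kG a b) (pG a b (L/2)) (qG a b (L/2)) 0 = a.
Proof.
move=> L0 hab hba; have [p0 pq qL] := ef_range L0 hab hba.
by rewrite /Gp clamp_lo // subrr mulr0 addr0.
Qed.

Lemma ef_GL (R : realType) (a b L : R) : 0 < L -> a - b <= L / 2 -> b - a <= L / 2 ->
  Gp a (kG a b) (pG a b (L/2)) (qG a b (L/2)) L = b.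
Proof.
move=> L0 hab hba; have [p0 pq qL] := ef_range L0 hab hba.
rewrite /Gp clamp_hi // /kG /pG /qG; have [ba|ab] := leP b a.
  rewrite intm1 mulN1r; lra.
rewrite intp1 mul1r; lra.
Qed.

Lemma ef_kr0 (R : realType) (a b L : R) : 0 < L -> a - b <= L / 2 -> b - a <= L / 2 ->
  krG (kG a b) (pG a b (L/2)) (qG a b (L/2)) 0 <= 0.
Proof.
move=> L0 hab hba; rewrite /krG /kG /pG /qG; have [ba|ab] := leP b a; case: ifP => //.
all: try (move=> /andP[h1 h2]); exfalso; lra.
Qed.

Lemma ef_kr0' (R : realType) (a b L : R) : 0 < L ->
  b + L / 2 = a -> krG (kG a b) (pG a b (L/2)) (qG a b (L/2)) 0 = -1.
Proof.
move=> L0 e; rewrite /krG /kG /pG /qG.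
have [ba|ab] := leP b a; last by exfalso; lra.
case: ifP => // /negbT; rewrite negb_and -!ltNge => /orP[] h; exfalso; lra.
Qed.

Lemma ef_klL (R : realType) (a b L : R) : 0 < L -> a - b <= L / 2 -> b - a <= L / 2 ->
  0 <= klG (kG a b) (pG a b (L/2)) (qG a b (L/2)) L.
Proof.
move=> L0 hab hba; rewrite /klG /kG /pG /qG; have [ba|ab] := leP b a; case: ifP => //.
all: try (move=> /andP[h1 h2]); exfalso; lra.
Qed.

Lemma ef_klL' (R : realType) (a b L : R) : 0 < L ->
  a + L / 2 = b -> klG (kG a b) (pG a b (L/2)) (qG a b (L/2)) L = 1.
Proof.
move=> L0 e; rewrite /klG /kG /pG /qG.
have [ba|ab] := leP b a; first by exfalso; lra.
case: ifP => // /negbT; rewrite negb_and -!ltNge => /orP[] h; exfalso; lra.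
Qed.

Lemma ef_ord (R : realType) (a b L t : R) : 0 < L -> a - b <= L / 2 -> b - a <= L / 2 ->
  krG (kG a b) (pG a b (L/2)) (qG a b (L/2)) t - klG (kG a b) (pG a b (L/2)) (qG a b (L/2)) t
   <= (if t == L / 2 then 1 else 0).
Proof.
move=> L0 hab hba; rewrite /krG /klG /kG /pG /qG.
have [ba|ab] := leP b a.
  have [tc|tc] := eqVneq t (L/2).
    rewrite tc lexx ltxx /= andbT andbF; case: ifP => _; lia.

  have [p1|p1] := leP (L / 2 + b - a) t; have [p2|p2] := ltP (L / 2 + b - a) t;
  have [q1|q1] := ltP t (L/2); have [q2|q2] := leP t (L/2) => //=; try lia; exfalso; lra.
have [tc|tc] := eqVneq t (L/2).
  rewrite tc lexx ltxx /=; case: ifP => _; lia.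

have [p1|p1] := leP (L / 2) t; have [p2|p2] := ltP (L / 2) t;
have [q1|q1] := ltP t (L / 2 + b - a); have [q2|q2] := leP t (L / 2 + b - a) => //=; try lia.
all: exfalso; lra.
Qed.

Lemma ef_eq (R : realType) (a L t : R) :
  krG (kG a a) (pG a a (L/2)) (qG a a (L/2)) t = 0 /\ klG (kG a a) (pG a a (L/2)) (qG a a (L/2)) t = 0.
Proof.
rewrite /krG /klG /kG /pG /qG lexx addrK; split; case: ifP => // /andP[h1 h2].
- by move: (le_lt_trans h1 h2); rewrite ltxx.
- by move: (lt_le_trans h1 h2); rewrite ltxx.
Qed.

Lemma krkl_supp (R : realType) (k : int) (p q t : R) :
  t != p -> t != q -> krG k p q t = klG k p q t.
Proof.
move=> tp tq; rewrite /krG /klG.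
by rewrite (le_eqVlt p t) (eq_sym p t) (negbTE tp) /= (le_eqVlt t q) (negbTE tq).
Qed.


Lemma mem_In (T : eqType) (x : T) (s : seq T) : x \in s -> List.In x s.
Proof. elim: s => //= y s IH; rewrite inE => /orP[/eqP ->|/IH]; [left|right] => //. Qed.

Lemma deg_half n : ~~ odd n -> (0 < n)%N -> (1 <= n %/ 2)%N.
Proof. move=> h1 h2; have h3 : (n %% 2 = 0)%N by rewrite modn2 (negbTE h1). lia. Qed.

Lemma eff_exists (R : realType) (V E : finType) (src tgt : E -> V) (w : V -> nat) (len : E -> R) (P : {set E}) :
  (forall e, 0 < len e) -> graph_connected src tgt -> in_CG src tgt P ->
  ~~ ((P == set0) && [forall v, w v == 0%N]) ->
  exists D', [/\ is_divisor len D', effective len D' & lin_equiv src tgt len (theta_div src tgt len w P) D'].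
Proof.
move=> L0 hc hP hnot.
pose S := [set v | (0 < degP src tgt P v)%N || (0 < w v)%N].
have srcS : forall e, e \in P -> src e \in S.
  move=> e eP; rewrite inE; apply/orP; left; rewrite /degP addn_gt0 !card_gt0; apply/orP; left.
  by apply/set0Pn; exists e; rewrite !inE eP eqxx.
have tgtS : forall e, e \in P -> tgt e \in S.
  move=> e eP; rewrite inE; apply/orP; left; rewrite /degP addn_gt0 !card_gt0; apply/orP; right.
  by apply/set0Pn; exists e; rewrite !inE eP eqxx.
have S0 : S != set0.
  case/nandP: hnot => [hP0 | /forallPn [v /eqP wv]]; apply/set0Pn.
  - have [e eP] : exists e, e \in P.
      by apply/existsP; apply: contraR hP0 => /existsPn hn; apply/eqP/setP => e; rewrite inE; apply/negbTE.
    by exists (src e); apply: srcS.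
  - by exists v; rewrite inE; apply/orP; right; rewrite lt0n; apply/eqP.
pose c := fun e => len e / 2.
have c0 : forall e, 0 <= c e by move=> e; have := L0 e; rewrite /c; lra.
have [h [H1 H2 H3]] := dist_exists c0 hc S0.
have hab : forall e, h (src e) - h (tgt e) <= len e / 2 := fun e => H2 e true.
have hba : forall e, h (tgt e) - h (src e) <= len e / 2 := fun e => H2 e false.
pose K := fun e => kG (h (src e)) (h (tgt e)).
pose pp := fun e => pG (h (src e)) (h (tgt e)) (len e / 2).
pose qq := fun e => qG (h (src e)) (h (tgt e)) (len e / 2).
pose f := fun x : tpoint V E R => match x with
  | TVert v => h v | TEdge e t => Gp (h (src e)) (K e) (pp e) (qq e) t end.
have fE : forall e t, 0 <= t <= len e -> edge_restr src tgt len f e t = Gp (h (src e)) (K e) (pp e) (qq e) t.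
  move=> e t /andP[t0 tL]; rewrite /edge_restr; case: eqP => [->|_].
    by rewrite /f /K /pp /qq ef_G0.
  case: eqP => [->|_] //; by rewrite /f /K /pp /qq ef_GL.
have rng : forall e, [/\ 0 <= pp e, pp e <= qq e & qq e <= len e] := fun e => ef_range (L0 e) (hab e) (hba e).
pose kr := fun e t => krG (K e) (pp e) (qq e) t.
pose kl := fun e t => klG (K e) (pp e) (qq e) t.
pose ord := fun x : tpoint V E R => match x with
   | TVert v => \sum_(e | src e == v) kr e 0 - \sum_(e | tgt e == v) kl e (len e)
   | TEdge e t => kr e t - kl e t end.
pose T := theta_div src tgt len w P.
exists (fun x => T x - ord x); split.
- exists (List.app (List.map (fun v => TVert E R v) (enum V))
     (List.flat_map (fun e => TEdge V e (pp e) :: TEdge V e (qq e) :: TEdge V e (len e / 2) :: nil) (enum E))).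
  move=> [v|e t] _ hx; apply: List.in_or_app.
    by left; apply: List.in_map; apply: mem_In; rewrite mem_enum.
  right; apply/List.in_flat_map; exists e; split; first by apply: mem_In; rewrite mem_enum.
  have [et|et] := eqVneq t (pp e); first by rewrite et; left.
  have [eq'|eq'] := eqVneq t (qq e); first by rewrite eq'; right; left.
  have [ec|ec] := eqVneq t (len e / 2); first by rewrite ec; right; right; left.
  move: hx; rewrite /T /ord /= (negbTE ec) andbF /kr /kl krkl_supp // subrr subr0 eqxx //.
- move=> [v|e t] hv; rewrite /T /ord /=.
  + have A : \sum_(e | src e == v) kr e 0 <= 0.
      rewrite -oppr_ge0 -sumrN; apply: sumr_ge0 => e _; rewrite oppr_ge0; exact: ef_kr0.
    have B : 0 <= \sum_(e | tgt e == v) kl e (len e).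
      by apply: sumr_ge0 => e _; exact: ef_klL.
    have [vS|vS] := boolP (v \in S).
      have : (0 <= Posz (degP src tgt P v %/ 2) - 1 + Posz (w v)).
        move: vS; rewrite inE => /orP[d|w0].
          have := deg_half (hP v) d; lia.
        lia.
      set s1 := \sum_(e | src e == v) kr e 0 in A *; set s2 := \sum_(e | tgt e == v) kl e (len e) in B *; lia.
    have Hm : \sum_(e | src e == v) kr e 0 - \sum_(e | tgt e == v) kl e (len e) <= -1.
      have [e [b [E1 E2]]] := H3 v vS.
      case: b E1 E2 => /= E1 E2.
      * have k1 : kr e 0 = -1 by apply: ef_kr0' => //; rewrite E1; exact: E2.
        rewrite (bigD1 e) /=; last by rewrite E1.
        have : \sum_(i | (src i == v) && (i != e)) kr i 0 <= 0.
          rewrite -oppr_ge0 -sumrN; apply: sumr_ge0 => i _; rewrite oppr_ge0; exact: ef_kr0.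
        set s1 := \sum_(i | (src i == v) && (i != e)) kr i 0.
        set s2 := \sum_(e | tgt e == v) kl e (len e) in B *.
        lia.
      * have k1 : kl e (len e) = 1 by apply: ef_klL' => //; rewrite E1; exact: E2.
        rewrite [X in _ - X](bigD1 e) /=; last by rewrite E1.
        have : 0 <= \sum_(i | (tgt i == v) && (i != e)) kl i (len i).
          by apply: sumr_ge0 => i _; exact: ef_klL.
        set s1 := \sum_(i | (tgt i == v) && (i != e)) kl i (len i).
        set s2 := \sum_(e | src e == v) kr e 0 in A *.
        lia.
    set s1 := \sum_(e | src e == v) kr e 0 in A Hm *; set s2 := \sum_(e | tgt e == v) kl e (len e) in B Hm *.
    lia.
  + case eP: (e \in P) => /=.
      have hs := H1 _ (srcS e eP); have ht := H1 _ (tgtS e eP).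
      rewrite /kr /kl /K /pp /qq hs ht.
      by have [-> ->] := ef_eq 0 (len e) t.
    have := ef_ord t (L0 e) (hab e) (hba e).
    rewrite /kr /kl /K /pp /qq; case: ifP => _ H; lia.
- exists f; split.
  + move=> e; have [r1 r2 r3] := rng e.
    apply: (@pl3 R _ (h (src e)) (K e) (pp e) (qq e) (len e)) => //; exact: fE.
  + move=> [v|e t] /= hv.
    * exists (fun e => kr e 0), (fun e => kl e (len e)); split.
        move=> e; have [r1 r2 r3] := rng e; split.
          apply: (RS_ext (Gp_RS (h (src e)) (K e) 0 r2) (L0 e)).
          move=> s hs; rewrite fE //; move: hs; rewrite add0r.
          by case/andP => -> ->.
        apply: (LS_ext (Gp_LS (h (src e)) (K e) (len e) r2) (L0 e)).
        move=> s hs; rewrite fE //; move: hs; rewrite subrr.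
        by case/andP => -> ->.
      by rewrite /ord opprB addrC subrK.
    * case/andP: hv => t0 tL.
      exists (kr e t), (kl e t); have [r1 r2 r3] := rng e; split.
      - apply: (RS_ext (Gp_RS (h (src e)) (K e) t r2) (d := len e - t)); first lra.
        move=> s /andP[h1 h2]; rewrite fE //; apply/andP; split; lra.
      - apply: (LS_ext (Gp_LS (h (src e)) (K e) t r2) (d := t)) => //.
        move=> s /andP[h1 h2]; rewrite fE //; apply/andP; split; lra.
      - by rewrite /ord opprB addrC subrK.
Qed.

Theorem theorem3p6 (R : realType) (V E : finType) (src tgt : E -> V)
    (w : V -> nat) (len : E -> R) (P : {set E}) :
  (0 < #|V|)%N ->
  graph_connected src tgt ->
  stable_weight src tgt w ->
  (forall e, 0 < len e) ->
  in_CG src tgt P ->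
  rank_neg1 src tgt len (theta_div src tgt len w P)
  <-> (P = set0 /\ forall v, w v = 0%N).
Proof.
move=> V0 hc _ L0 hP; split.
- move=> Hr.
  case Hb: ((P == set0) && [forall v, w v == 0%N]).
    case/andP: Hb => /eqP -> /forallP H; split => // v; exact/eqP.
  have [D' [h1 h2 h3]] := eff_exists L0 hc hP (negbT Hb).
  by exfalso; apply: Hr; exists D'.
- by move=> [-> w0]; exact: no_eff.
Qed.
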